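(* Let $\mathcal{R}$ be the family of all halfplanes. For $k=2$ and any $m \geq 2$, we do not have hitting $2$-cliques with respect to $\mathcal{R}$; that is, there exists a finite point set $V \subset \mathbb{R}^2$ such that for every collection of pairwise disjoint $2$-element subsets of $V$ some hyperedge of $\mathcal{H}(V,\mathcal{R},m)$ contains none of these subsets.
   Context: For a finite $V \subset \mathbb{R}^2$ and a family $\mathcal{R}$ of subsets of $\mathbb{R}^2$, $\mathcal{H}(V,\mathcal{R},m)$ is the hypergraph on $V$ whose hyperedges are the sets $V \cap R$, $R \in \mathcal{R}$, of size exactly $m$. For fixed $k,m,\mathcal{R}$ we say we have hitting $k$-cliques if for every finite $V \subset \mathbb{R}^2$ there exist pairwise disjoint $k$-element subsets of $V$ such that every hyperedge of $\mathcal{H}(V,\mathcal{R},m)$ fully contains at least one of them. *)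

(* Defs.v *)
From HB Require Import structures.
From mathcomp Require Import all_boot all_order all_algebra.
From mathcomp Require Import finmap.
From mathcomp Require Import reals.
Set Implicit Arguments. Unset Strict Implicit. Unset Printing Implicit Defensive.
Import Order.TTheory GRing.Theory Num.Theory.
Local Open Scope ring_scope.

Section Defs.
Variable R : realType.

Definition point := (R * R)%type.

Definition region := point -> bool.

Definition halfplanes : region -> Prop :=
  fun r => exists a b c : R, (a, b) != (0, 0) /\
    forall p : point, r p = (a * p.1 + b * p.2 <= c).

Definition hyperedge (V : {fset point}) (Rfam : region -> Prop) (m : nat)
    (e : {fset point}) : Prop :=
  (exists r, Rfam r /\ e = [fset p in V | r p]%fset) /\ #|` e| = m.

Definition hitting_cliques_for (k m : nat) (Rfam : region -> Prop)
    (V : {fset point}) : Prop :=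
  exists C : {fset {fset point}},
    (forall P, P \in C -> (P `<=` V)%fset /\ #|` P| = k) /\
    (forall P Q, P \in C -> Q \in C -> P != Q -> [disjoint P & Q]%fset) /\
    (forall e, hyperedge V Rfam m e -> exists2 P, P \in C & (P `<=` e)%fset).

End Defs.

(* Main.v *)
Require Import Defs.
From HB Require Import structures.
From mathcomp Require Import all_boot all_order all_algebra.
From mathcomp Require Import finmap.
From mathcomp Require Import reals.
From mathcomp Require Import zify.
Import Order.TTheory GRing.Theory Num.Theory.
Set Implicit Arguments. Unset Strict Implicit. Unset Printing Implicit Defensive.

Section Constr.
Variable R : realType.
Variable m : nat.
Hypothesis hm : (2 <= m)%N.

Definition delta j := (m ^ (m.-1 - j))%N.
Definition Tn j k := (delta j * (2 * k + 1))%N.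
Definition Pt j k : point R :=
  (((Tn j k)%:Z)%:~R, ((Tn j k)%:Z ^+ 2 - (delta j)%:Z ^+ 2)%:~R)%R.

Lemma delta_gt0 j : (0 < delta j)%N.
Proof. rewrite /delta expn_gt0; apply/orP; left; lia. Qed.

Definition sig u := (2 * u + 1)%N.
Definition ra u : R := ((- 2 * (sig u)%:Z)%R)%:~R.
Definition rc u : R := ((- ((sig u)%:Z ^+ 2))%R)%:~R.
Definition reg u : region R := fun p => (ra u * p.1 + 1 * p.2 <= rc u)%R.

Lemma nat_key (u k d : nat) : (0 < d)%N ->
  ((d * (2*k+1) <= (2*u+1) + d)%N && (2*u+1 <= d*(2*k+1) + d)%N) = (k == u %/ d)%N.
Proof.
move=> d0.
have Hu := divn_eq u d. have Hr := ltn_pmod u d0.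
set q := u %/ d in Hu *. set r := u %% d in Hu Hr.
case: (ltngtP k q) => Hkq.
- apply/negbTE; rewrite negb_and; apply/orP; right.
  have: (k.+1 * d <= q * d)%N by rewrite leq_mul2r Hkq orbT.
  rewrite -ltnNge. nia.
- apply/negbTE; rewrite negb_and; apply/orP; left.
  have: (q.+1 * d <= k * d)%N by rewrite leq_mul2r Hkq orbT.
  rewrite -ltnNge. nia.
- rewrite Hkq. apply/andP; split; nia.
Qed.

Lemma reg_Pt u j k : reg u (Pt j k) = (k == u %/ delta j)%N.
Proof.
rewrite /reg /Pt /ra /rc /= mul1r -intrM -intrD ler_int -nat_key ?delta_gt0 //.
rewrite /Tn /sig.
set T := (delta j * (2 * k + 1))%N. set s := (2 * u + 1)%N. set d := delta j.
apply/idP/andP.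
- move=> H. split; nia.
- case=> H1 H2. nia.
Qed.


Lemma Pt_inj_k j k1 k2 : Pt j k1 = Pt j k2 -> k1 = k2.
Proof.
move=> /(congr1 fst) /= /intr_inj [] E.
have := delta_gt0 j. move: E; rewrite /Tn. nia.
Qed.

Lemma Pt_inj_j j1 j2 k1 k2 : (j1 < m)%N -> (j2 < m)%N ->
  Pt j1 k1 = Pt j2 k2 -> j1 = j2.
Proof.
move=> h1 h2 E.
have E1 := congr1 fst E. have E2 := congr1 snd E. move: E1 E2 => /= /intr_inj E1 /intr_inj.
rewrite E1 => /addrI /eqP; rewrite eqr_opp => /eqP E2.
have Ed : delta j1 = delta j2 by nia.
move: Ed; rewrite /delta => /eqP; rewrite eqn_exp2l // => /eqP. lia.
Qed.

Lemma div_step u l c : (l.+1 < m)%N -> (c < m)%N -> forall i, (i <= l)%N ->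
  ((m * (u %/ delta l) + c) * delta l.+1) %/ delta i = u %/ delta i.
Proof.
move=> hl hc i hi.
have m0 : (0 < m)%N by lia.
have Ed : forall j, (j <= l.+1)%N -> delta j = (m ^ (m.-1 - l.+1) * m ^ (l.+1 - j))%N.
  move=> j hj; rewrite /delta -expnD; congr (_ ^ _); lia.
rewrite (Ed i) ?(leqW hi) // (Ed l) //.
have dl1 : delta l.+1 = m ^ (m.-1 - l.+1) by rewrite /delta.
rewrite dl1. set E := m ^ (m.-1 - l.+1).
have -> : (l.+1 - i = (l - i).+1)%N by lia.
have -> : (l.+1 - l = 1)%N by lia.
rewrite expn1 mulnC divnMl ?expn_gt0 ?m0 // expnS divnMA.
rewrite [m * (u %/ _)]mulnC divnMDl // (divn_small hc) addn0.
by rewrite mulnA (divnMA u (E * m)).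
Qed.


Local Open Scope fset_scope.
Section Pairs.
Variable C : {fset {fset point R}}.
Hypothesis hC2 : forall P, P \in C -> #|` P| = 2.
Hypothesis hCd : forall P Q, P \in C -> Q \in C -> P != Q -> [disjoint P & Q]%fset.

Definition pairedb (x y : point R) :=
  has (fun P : {fset point R} => (x \in P) && (y \in P) && (x != y)) (enum_fset C).

Lemma pairedP x y : reflect (exists2 P, P \in C & [/\ x \in P, y \in P & x != y]) (pairedb x y).
Proof.
apply: (iffP hasP) => [[P HP /andP [/andP [h1 h2] h3]]|[P HP [h1 h2 h3]]].
  by exists P.
by exists P => //; rewrite h1 h2 h3.
Qed.

Lemma paired_sym x y : pairedb x y -> pairedb y x.
Proof.
case/pairedP=> P HP [h1 h2 h3]; apply/pairedP; exists P => //; split=> //.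
by rewrite eq_sym.
Qed.

Lemma two_elems (P : {fset point R}) (y z x : point R) : #|` P| = 2 -> x \in P -> y \in P -> z \in P ->
  x != y -> x != z -> y = z.
Proof.
move=> h2 hx hy hz hxy hxz.
have := cardfsD1 x P. rewrite hx h2 => [[]] /esym /eqP /cardfs1P [w Hw].
have : y \in P `\ x by apply/fsetD1P; split=> //; rewrite eq_sym.
have : z \in P `\ x by apply/fsetD1P; split=> //; rewrite eq_sym.
by rewrite Hw !inE => /eqP -> /eqP ->.
Qed.

Lemma paired_uniq x y z : pairedb x y -> pairedb x z -> y = z.
Proof.
case/pairedP=> P HP [h1 h2 h3]; case/pairedP=> Q HQ [g1 g2 g3].
case: (eqVneq P Q) => [EPQ|NPQ].
  by subst Q; apply: (two_elems (hC2 HP) h1).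
by have /fdisjointP /(_ x h1) := hCd HP HQ NPQ; rewrite g1.
Qed.

Lemma count_paired (A Q : seq (point R)) : uniq Q ->
  (count (fun q => has (fun a => pairedb a q) A) Q <= size A)%N.
Proof.
move=> uQ; elim: A => [|a A IH] /=.
  by rewrite (eq_count (a2 := pred0)) ?count_pred0.
have E := count_predUI (fun q => pairedb a q) (fun q => has (fun a => pairedb a q) A) Q.
have H1 : (count (fun q => pairedb a q) Q <= 1)%N.
  case: (boolP (has (fun q => pairedb a q) Q)) => [/hasP [q0 _ Hq0]|].
    rewrite (eq_count (a2 := pred1 q0)); first by rewrite count_uniq_mem // leq_b1.
    by move=> q /=; apply/idP/eqP => [Hq|->//]; by rewrite (paired_uniq Hq0 Hq).
  by rewrite has_count -leqNgt => /leq_trans; apply.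
have H2 : (count (predU (fun q => pairedb a q) (fun q => has (fun a => pairedb a q) A)) Q <=
   count (fun q => pairedb a q) Q + count (fun q => has (fun a => pairedb a q) A) Q)%N.
  by rewrite -E leq_addr.
apply: (leq_trans H2). by rewrite -add1n leq_add.
Qed.

Definition node u j := Pt j (u %/ delta j).

Lemma greedy l : (l < m)%N -> exists2 u, (u < m ^ m.-1)%N &
  forall i j, (i < j)%N -> (j <= l)%N -> ~~ pairedb (node u i) (node u j).
Proof.
have m0 : (0 < m)%N by lia.
elim: l => [_|l IH hl].
  exists 0%N; first by rewrite expn_gt0 m0.
  move=> i j ij j0; lia.
have [u hu Hu] := IH (ltnW hl).
set k := u %/ delta l.
set Qs := [seq Pt l.+1 (m * k + c) | c <- iota 0 m].
set A := [seq node u i | i <- iota 0 l.+1].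
have uQ : uniq Qs.
  rewrite map_inj_in_uniq ?iota_uniq // => c1 c2 _ _ /Pt_inj_k; lia.
have Hc := count_paired A uQ.
have : ~~ all (fun q => has (fun a => pairedb a q) A) Qs.
  rewrite all_count; apply/negP => /eqP E.
  move: Hc; rewrite E /Qs /A !size_map !size_iota. lia.
case/allPn => q /mapP [c]; rewrite mem_iota add0n => /andP [_ hc] -> Hq.
have hk : (k < m ^ l)%N.
  rewrite ltn_divLR ?delta_gt0 // /delta -expnD.
  have -> : (l + (m.-1 - l) = m.-1)%N by lia.
  done.
exists ((m * k + c) * delta l.+1)%N.
  have -> : (m ^ m.-1 = m ^ l.+1 * delta l.+1)%N.
    rewrite /delta -expnD; congr (_ ^ _); lia.
  rewrite ltn_pmul2r ?delta_gt0 // expnS. nia.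
have Eq : forall i, (i <= l)%N -> node ((m * k + c) * delta l.+1) i = node u i.
  by move=> i hi; rewrite /node div_step.
move=> i j ij jl.
case: (ltnP j l.+1) => hj.
  rewrite !Eq //; [apply: Hu => //|]; lia.
have -> : j = l.+1 by lia.
rewrite Eq; last by lia.
rewrite /node mulnK ?delta_gt0 //.
apply: contra Hq => H; apply/hasP; exists (node u i) => //.
by apply: map_f; rewrite mem_iota; lia.
Qed.

End Pairs.

End Constr.
Theorem corollary6 (R : realType) (m : nat) (hm : (2 <= m)%N) :
  exists V : {fset point R},
    forall C : {fset {fset point R}},
      (forall P, P \in C -> (P `<=` V)%fset /\ #|` P| = 2) ->
      (forall P Q, P \in C -> Q \in C -> P != Q -> [disjoint P & Q]%fset) ->
      exists e : {fset point R},
        hyperedge V (@halfplanes R) m e /\ (forall P, P \in C -> ~ (P `<=` e)%fset).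
Proof.
set Vs := flatten [seq [seq Pt R m j k | k <- iota 0 (m ^ j)] | j <- iota 0 m].
exists [fset x in Vs]%fset.
move=> C hC hCd.
have hC2 : forall P, P \in C -> #|` P| = 2 by move=> P /hC [].
have [u hu Hu] := greedy hm hC2 hCd (l := m.-1) ltac:(lia).
set s := [seq node R m u j | j <- iota 0 m].
set e := [fset p in [fset x in Vs] | @reg R u p]%fset.
have Ee : e = [fset x in s]%fset.
  apply/fsetP => p; rewrite !inE.
  apply/andP/mapP.
    case=> /flatten_mapP [j hj /mapP [k hk ->]]; rewrite (reg_Pt _ hm) => /eqP ->.
    by exists j.
  case=> j hj ->; split; last by rewrite /node (reg_Pt _ hm).
  apply/flatten_mapP; exists j => //; apply: map_f.
  move: hj; rewrite !mem_iota !add0n => /andP [_ hj].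
  rewrite ltn_divLR ?delta_gt0 // /delta -expnD.
  have -> : (j + (m.-1 - j) = m.-1)%N by lia.
  done.
exists e; split.
  split.
    exists (@reg R u); split => //.
    exists (ra R u), 1%R, (rc R u); split => //.
    by rewrite xpair_eqE oner_eq0 andbF.
  rewrite Ee card_fseq undup_id ?size_map ?size_iota //.
  rewrite map_inj_in_uniq ?iota_uniq // => j1 j2.
  rewrite !mem_iota !add0n => /andP [_ h1] /andP [_ h2].
  by move/Pt_inj_j; apply.
move=> P HP sub.
have [hPV h2] := hC P HP.
have : P != fset0 by rewrite -cardfs_gt0 h2.
case/fset0Pn => x hx.
have := cardfsD1 x P; rewrite hx h2 => [[]] /esym /eqP /cardfs1P [y Hy].
have : y \in (P `\ x)%fset by rewrite Hy inE.
move/fsetD1P => [yx yP].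
have pxy : pairedb C x y by apply/pairedP; exists P => //; split => //; rewrite eq_sym.
have : x \in e by apply: (fsubsetP sub).
have : y \in e by apply: (fsubsetP sub).
rewrite Ee !inE => /mapP [j hj Ey] /mapP [i hi Ex].
rewrite Ex Ey in pxy yx.
move: hi hj; rewrite !mem_iota !add0n => /andP [_ hi] /andP [_ hj].
case: (ltngtP i j) => ij.
- by move: (Hu i j ij) pxy => /(_ ltac:(lia)) /negP.
- by move: (Hu j i ij) (paired_sym pxy) => /(_ ltac:(lia)) /negP.
- by move: yx; rewrite ij eqxx.
Qed.
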